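(* Let $\{x^k\}$ be generated by the MPG algorithm described in the context, and suppose that for each $j=1,\ldots,m$ the gradient $\nabla G_j$ is Lipschitz continuous with constant $L_j>0$. Then for every $k$ at which the step size $t_k$ is computed, $t_k\ge t_{\min}:=\min\{1,\tau_1\gamma/L_{\max}\}$, where $L_{\max}:=\max_{j=1,\ldots,m}L_j$.
   Context: Let $F:\mathbb{R}^n\to(\mathbb{R}\cup\{+\infty\})^m$, $F=(F_1,\ldots,F_m)$, with $F_j=G_j+H_j$ for $j=1,\ldots,m$, where: (i) each $G_j:\mathbb{R}^n\to\mathbb{R}$ is continuously differentiable and convex; (ii) each $H_j:\mathbb{R}^n\to\mathbb{R}\cup\{+\infty\}$ is proper, convex and continuous on its domain; (iii) $\mathrm{dom}(F):=\{x: F_j(x)<+\infty\ \forall j\}$ is nonempty and closed. For $u,v\in\mathbb{R}^m$, $u\preceq v$ means $u_j\le v_j$ for all $j$. For $x\in\mathrm{dom}(F)$ and $\alpha>0$ define $\psi_x(u):=\max_{j=1,\ldots,m}\big(\nabla G_j(x)^\top(u-x)+H_j(u)-H_j(x)\big)$, $p_\alpha(x):=\arg\min_{u\in\mathbb{R}^n}\psi_x(u)+\frac{1}{2\alpha}\|u-x\|^2$ (unique minimizer), and $\theta_\alpha(x):=\psi_x(p_\alpha(x))+\frac{1}{2\alpha}\|p_\alpha(x)-x\|^2$. MPG algorithm. Step 0: choose $x^0\in\mathrm{dom}(F)$, $\alpha>0$, $\gamma\in(0,2/\alpha)$, $0<\tau_1<\tau_2<1$; set $k=0$. Step 1: compute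 $p^k:=p_\alpha(x^k)$ and $\theta_\alpha(x^k)$. Step 2: if $\theta_\alpha(x^k)=0$, stop. Step 3: set $d^k:=p^k-x^k$, take $j_k^*\in\arg\max_{j}\nabla G_j(x^k)^\top d^k$, set $t=1$. Step 3.1: if $G_{j_k^*}(x^k+td^k)\le G_{j_k^*}(x^k)+t\nabla G_{j_k^*}(x^k)^\top d^k+t\frac{\gamma}{2}\|d^k\|^2$, go to Step 3.2; otherwise replace $t$ by some value in $[\tau_1 t,\tau_2 t]$ and repeat Step 3.1. Step 3.2: if $F(x^k+td^k)\preceq F(x^k)$, set $t_k=t$ and go to Step 4. Step 3.3: replace $t$ by some value in $[\tau_1 t,\tau_2 t]$; if $G_j(x^k+td^k)\le G_j(x^k)+t\nabla G_j(x^k)^\top d^k+t\frac{\gamma}{2}\|d^k\|^2$ for all $j=1,\ldots,m$, set $t_k=t$ and go to Step 4; otherwise repeat Step 3.3. Step 4: $x^{k+1}:=x^k+t_kd^k$, $k\leftarrow k+1$, go to Step 1. *)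

(* Defs.v *)
From HB Require Import structures.
From mathcomp Require Import all_boot all_order all_algebra.
From mathcomp Require Import all_classical all_reals all_analysis.
Set Implicit Arguments.
Unset Strict Implicit.
Unset Printing Implicit Defensive.
Import Order.TTheory GRing.Theory Num.Theory.
Import numFieldNormedType.Exports.
Local Open Scope ring_scope.
Local Open Scope classical_set_scope.

Definition dotv {R : realType} {n : nat} (u v : 'rV[R]_n) : R :=
  \sum_(i < n) u ord0 i * v ord0 i.
Definition sqnorm {R : realType} {n : nat} (u : 'rV[R]_n) : R := dotv u u.
Definition enorm {R : realType} {n : nat} (u : 'rV[R]_n) : R :=
  Num.sqrt (sqnorm u).

Definition is_gradient {R : realType} {n : nat}
  (f : 'rV[R]_n -> R) (g : 'rV[R]_n -> 'rV[R]_n) : Prop :=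
  forall x, differentiable f x /\ forall v, 'd f x v = dotv (g x) v.

Definition convex_real {R : realType} {n : nat} (f : 'rV[R]_n -> R) : Prop :=
  forall x y (l : R), 0 <= l <= 1 ->
    f (l *: x + (1 - l) *: y) <= l * f x + (1 - l) * f y.

Definition domE {R : realType} {n : nat} (h : 'rV[R]_n -> \bar R) : set 'rV[R]_n :=
  [set x | (h x < +oo)%E].

Definition proper_ext {R : realType} {n : nat} (h : 'rV[R]_n -> \bar R) : Prop :=
  (exists x, (h x < +oo)%E) /\ (forall x, (-oo < h x)%E).

(* convexity of an extended-valued function (points outside the domain give
   a right-hand side +oo, hence only domain points need to be checked) *)
Definition convex_ext {R : realType} {n : nat} (h : 'rV[R]_n -> \bar R) : Prop :=
  forall x y (l : R), domE h x -> domE h y -> 0 <= l <= 1 ->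
    (h (l *: x + (1 - l) *: y)%R <= (l * fine (h x) + (1 - l) * fine (h y))%:E)%E.

Definition continuous_on_dom {R : realType} {n : nat} (h : 'rV[R]_n -> \bar R) : Prop :=
  {within domE h, continuous (fun x => fine (h x))}.

Definition lipschitz_grad {R : realType} {n : nat}
  (g : 'rV[R]_n -> 'rV[R]_n) (L : R) : Prop :=
  forall x y, enorm (g x - g y) <= L * enorm (x - y).

Definition Fj {R : realType} {n m : nat} (G : 'I_m -> 'rV[R]_n -> R)
  (H : 'I_m -> 'rV[R]_n -> \bar R) (j : 'I_m) (x : 'rV[R]_n) : \bar R :=
  ((G j x)%:E + H j x)%E.

Definition domF {R : realType} {n m : nat} (H : 'I_m -> 'rV[R]_n -> \bar R)
  : set 'rV[R]_n := [set x | forall j, (H j x < +oo)%E].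

Definition F_le {R : realType} {n m : nat} (G : 'I_m -> 'rV[R]_n -> R)
  (H : 'I_m -> 'rV[R]_n -> \bar R) (y x : 'rV[R]_n) : Prop :=
  forall j, (Fj G H j y <= Fj G H j x)%E.

Definition composite_setting {R : realType} {n m : nat}
  (G : 'I_m -> 'rV[R]_n -> R) (gradG : 'I_m -> 'rV[R]_n -> 'rV[R]_n)
  (H : 'I_m -> 'rV[R]_n -> \bar R) : Prop :=
  [/\ forall j, is_gradient (G j) (gradG j) /\ continuous (gradG j)
                /\ convex_real (G j),
      forall j, proper_ext (H j) /\ convex_ext (H j) /\ continuous_on_dom (H j),
      domF H !=set0 & closed (domF H)].

Definition psi {R : realType} {n m : nat}
  (gradG : 'I_m -> 'rV[R]_n -> 'rV[R]_n) (H : 'I_m -> 'rV[R]_n -> \bar R)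
  (x u : 'rV[R]_n) : \bar R :=
  \big[maxe/-oo%E]_(j < m) ((dotv (gradG j x) (u - x))%:E + H j u - H j x)%E.

Definition prox_obj {R : realType} {n m : nat}
  (gradG : 'I_m -> 'rV[R]_n -> 'rV[R]_n) (H : 'I_m -> 'rV[R]_n -> \bar R)
  (alpha : R) (x u : 'rV[R]_n) : \bar R :=
  (psi gradG H x u + (sqnorm (u - x) / (2 * alpha))%:E)%E.

Definition is_prox {R : realType} {n m : nat}
  (gradG : 'I_m -> 'rV[R]_n -> 'rV[R]_n) (H : 'I_m -> 'rV[R]_n -> \bar R)
  (alpha : R) (x p : 'rV[R]_n) : Prop :=
  forall u, (prox_obj gradG H alpha x p <= prox_obj gradG H alpha x u)%E.

Definition theta {R : realType} {n m : nat}
  (gradG : 'I_m -> 'rV[R]_n -> 'rV[R]_n) (H : 'I_m -> 'rV[R]_n -> \bar R)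
  (alpha : R) (x p : 'rV[R]_n) : \bar R := prox_obj gradG H alpha x p.

Section LineSearch.
Variables (R : realType) (c desc call : R -> Prop) (tau1 tau2 : R).
(* c t    : Armijo-type test of Step 3.1 for j_k^*
   desc t : F(x^k + t d^k) ⪯ F(x^k)   (Step 3.2)
   call t : Armijo-type test of Step 3.3 for all j *)

(* values of t at which Step 3.1 is (re)executed *)
Inductive ls_step31 : R -> Prop :=
| ls31_init : ls_step31 1
| ls31_back t t' : ls_step31 t -> ~ c t -> tau1 * t <= t' <= tau2 * t ->
    ls_step31 t'.

(* values of t held when Step 3.3 is (re)entered, before the replacement *)
Inductive ls_step33 : R -> Prop :=
| ls33_init t : ls_step31 t -> c t -> ~ desc t -> ls_step33 t
| ls33_back t t' : ls_step33 t -> tau1 * t <= t' <= tau2 * t -> ~ call t' ->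
    ls_step33 t'.

(* possible outputs t_k of Step 3 *)
Inductive ls_result : R -> Prop :=
| lsr_32 t : ls_step31 t -> c t -> desc t -> ls_result t
| lsr_33 t t' : ls_step33 t -> tau1 * t <= t' <= tau2 * t -> call t' ->
    ls_result t'.
End LineSearch.

Definition armijo {R : realType} {n m : nat}
  (G : 'I_m -> 'rV[R]_n -> R) (gradG : 'I_m -> 'rV[R]_n -> 'rV[R]_n)
  (gamma : R) (j : 'I_m) (x d : 'rV[R]_n) (t : R) : Prop :=
  G j (x + t *: d) <= G j x + t * dotv (gradG j x) d + t * (gamma / 2) * sqnorm d.

(* iteration k is reached iff the algorithm has not stopped at any i < k *)
Definition reached {R : realType} {n m : nat}
  (gradG : 'I_m -> 'rV[R]_n -> 'rV[R]_n) (H : 'I_m -> 'rV[R]_n -> \bar R)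
  (alpha : R) (x p : nat -> 'rV[R]_n) (k : nat) : Prop :=
  forall i, (i < k)%N -> theta gradG H alpha (x i) (p i) <> 0%E.

Definition MPG_sequence {R : realType} {n m : nat}
  (G : 'I_m -> 'rV[R]_n -> R) (gradG : 'I_m -> 'rV[R]_n -> 'rV[R]_n)
  (H : 'I_m -> 'rV[R]_n -> \bar R) (alpha gamma tau1 tau2 : R)
  (x p : nat -> 'rV[R]_n) (t : nat -> R) (jstar : nat -> 'I_m) : Prop :=
  [/\
      domF H (x 0%N), 0 < alpha, 0 < gamma < 2 / alpha & (0 < tau1) && (tau1 < tau2 < 1)]
  /\ forall k, reached gradG H alpha x p k ->
     is_prox gradG H alpha (x k) (p k) /\
     (* Steps 2-4 when the algorithm does not stop *)
     (theta gradG H alpha (x k) (p k) <> 0%E ->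
      let d := p k - x k in
      [/\ forall j, dotv (gradG j (x k)) d <= dotv (gradG (jstar k) (x k)) d,
          ls_result (armijo G gradG gamma (jstar k) (x k) d)
                    (fun s => F_le G H (x k + s *: d) (x k))
                    (fun s => forall j, armijo G gradG gamma j (x k) d s)
                    tau1 tau2 (t k)
        & x k.+1 = x k + t k *: d]).

Definition Lmax {R : realType} {m : nat} (L : 'I_m -> R) : R :=
  \big[Num.max/0]_(j < m) L j.

(* Main.v *)
Require Import Defs.
From HB Require Import structures.
From mathcomp Require Import all_boot all_order all_algebra.
From mathcomp Require Import all_classical all_reals all_analysis.
From mathcomp Require Import ring lra.
Import Order.TTheory GRing.Theory Num.Theory.
Import numFieldNormedType.Exports.
Local Open Scope ring_scope.

Section Vec.
Context {R : realType} {n : nat}.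
Implicit Types (u v w : 'rV[R]_n) (r : R).
Lemma dotvBl u v w : dotv (u - v) w = dotv u w - dotv v w.
Proof. by rewrite /dotv -sumrB; apply: eq_bigr => i _; rewrite !mxE mulrBl. Qed.
Lemma dotvDl u v w : dotv (u + v) w = dotv u w + dotv v w.
Proof. by rewrite /dotv -big_split; apply: eq_bigr => i _; rewrite !mxE mulrDl. Qed.
Lemma dotvDr u v w : dotv u (v + w) = dotv u v + dotv u w.
Proof. by rewrite /dotv -big_split; apply: eq_bigr => i _; rewrite !mxE mulrDr. Qed.
Lemma dotvBr u v w : dotv u (v - w) = dotv u v - dotv u w.
Proof. by rewrite /dotv -sumrB; apply: eq_bigr => i _; rewrite !mxE mulrBr. Qed.
Lemma dotvZr u r w : dotv u (r *: w) = r * dotv u w.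
Proof. by rewrite /dotv mulr_sumr; apply: eq_bigr => i _; rewrite !mxE mulrCA. Qed.
Lemma dotvZl u r w : dotv (r *: u) w = r * dotv u w.
Proof. by rewrite /dotv mulr_sumr; apply: eq_bigr => i _; rewrite !mxE mulrA. Qed.
Lemma dotv0r u : dotv u 0 = 0.
Proof. by rewrite /dotv big1 // => i _; rewrite mxE mulr0. Qed.
Lemma sqnorm_ge0 u : 0 <= sqnorm u.
Proof. by rewrite /sqnorm /dotv sumr_ge0 // => i _; rewrite -expr2 sqr_ge0. Qed.
Lemma sqnormZ r u : sqnorm (r *: u) = r ^+ 2 * sqnorm u.
Proof. by rewrite /sqnorm dotvZl dotvZr mulrA expr2. Qed.
Lemma enorm_sq u : enorm u ^+ 2 = sqnorm u.
Proof. by rewrite /enorm sqr_sqrtr // sqnorm_ge0. Qed.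
Lemma enorm_ge0 u : 0 <= enorm u.
Proof. exact: sqrtr_ge0. Qed.
Lemma amgm (e : R) u v : 2 * e * dotv u v <= sqnorm u + e ^+ 2 * sqnorm v.
Proof.
rewrite /sqnorm /dotv !mulr_sumr -big_split /=; apply: ler_sum => i _.
have := sqr_ge0 (u ord0 i - e * v ord0 i); nra.
Qed.
End Vec.

Section Descent.
Variables (R : realType) (n : nat) (G : 'rV[R]_n -> R) (g : 'rV[R]_n -> 'rV[R]_n).
Hypothesis hg : is_gradient G g.

Lemma phi_derive (x d : 'rV[R]_n) (s : R) :
  is_derive s 1 (fun s => G (x + s *: d)) (dotv (g (x + s *: d)) d).
Proof.
have [dG dd] := hg (x + s *: d).
have Hd : derivable G (x + s *: d) d by exact: diff_derivable.
have E : forall h : R, ((fun s => G (x + s *: d)) \o shift s) (h *: 1) = (G \o shift (x + s *: d)) (h *: d).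
  move=> h /=; congr (G _).
  by rewrite /shift /= -[h%:A]/(h * 1) mulr1 scalerDl addrCA.
split.
  rewrite /derivable; set g1 := fun h => h^-1 *: _.
  suff -> : g1 = (fun h : R => h^-1 *: ((G \o shift (x + s *: d)) (h *: d) - G (x + s *: d))) by [].
  by apply: funext => h; rewrite /g1 E.
rewrite /derive; set g1 := fun h => h^-1 *: _.
suff -> : g1 = (fun h : R => h^-1 *: ((G \o shift (x + s *: d)) (h *: d) - G (x + s *: d))).
  by rewrite -dd -deriveE.
by apply: funext => h; rewrite /g1 E.
Qed.

Lemma f_derive (x d : 'rV[R]_n) (c K s : R) :
  is_derive s 1 ((fun s => G (x + s *: d)) - c *: id - K *: (id ^+ 2))
     (dotv (g (x + s *: d)) d - c * 1 - K * (2 * s)).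
Proof.
have := phi_derive x d s => P.
apply: is_deriveB.
apply: is_derive_eq.
by rewrite /= -[(_)%:A]/(_ * 1) mulr1 expr1 -[K *: _]/(K * _).
Qed.

Lemma descent (L : R) x d t : 0 < L -> lipschitz_grad g L -> 0 <= t ->
  G (x + t *: d) <= G x + t * dotv (g x) d + L / 2 * t ^+ 2 * sqnorm d.
Proof.
move=> L0 Lg t0.
set c := dotv (g x) d; set K := L / 2 * sqnorm d.
pose f := (fun s => G (x + s *: d)) - c *: id - K *: (id ^+ 2).
have Df := fun s => f_derive x d c K s.
have key : f t <= f 0.
  have : {in `[0, t]%R &, {homo f : x y /~ x <= y}}.
    apply: ler0_derive1_le_cc.
    - by move=> s _; exact: ex_derive.
    - move=> s; rewrite in_itv /= => /andP[s0 st].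
      rewrite derive1E; case: (Df s) => _ ->.
      have Lip := Lg (x + s *: d) x.
      rewrite addrAC subrr add0r in Lip.
      set a := g (x + s *: d) - g x in Lip.
      have Ea : dotv a d = dotv (g (x + s *: d)) d - c by rewrite dotvBl.
      have sq : sqnorm a <= L ^+ 2 * (s ^+ 2 * sqnorm d).
        rewrite -sqnormZ -!enorm_sq -exprMn.
        have := enorm_ge0 a; have := enorm_ge0 (s *: d); nra.
      have am := amgm (L * s) a d.
      have D0 := sqnorm_ge0 d.
      have Ls : 0 < L * s by rewrite mulr_gt0.
      have : dotv a d <= L * s * sqnorm d.
        have : 2 * (L * s) * dotv a d <= 2 * (L * s) * (L * s * sqnorm d) by nra.
        move=> h; nra.
      rewrite Ea /K; lra.
    - by apply: derivable_within_continuous => s _; exact: ex_derive.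
  by move=> /(_ t 0); apply; rewrite ?in_itv /= ?lexx ?t0.
have Ef : forall s, f s = G (x + s *: d) - c * s - K * (s * s) by move=> s.
move: key; rewrite !Ef scale0r addr0 !mulr0 subr0 subr0 -expr2 /K.
have := sqnorm_ge0 d; nra.
Qed.
End Descent.

Lemma armijo_of (R : realType) (n m : nat) (G : 'I_m -> 'rV[R]_n -> R) gradG
  (gamma L : R) j x d (s : R) :
  is_gradient (G j) (gradG j) -> 0 < L -> lipschitz_grad (gradG j) L ->
  0 <= s -> L * s <= gamma -> armijo G gradG gamma j x d s.
Proof.
move=> hg L0 Lg s0 Ls; rewrite /armijo.
have := @descent R n (G j) (gradG j) hg L x d s L0 Lg s0.
have := sqnorm_ge0 d => D0.
have : s * (L * s) * sqnorm d <= s * gamma * sqnorm d.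
  by apply: ler_wpM2r => //; apply: ler_wpM2l.
nra.
Qed.

Section LS.
Context {R : realType}.
Lemma ls_bound (c desc call : R -> Prop) (tau1 tau2 b : R) :
  0 < tau1 -> tau1 < tau2 -> tau2 < 1 -> 0 < b ->
  (forall s, 0 < s <= b -> c s) -> (forall s, 0 < s <= b -> call s) ->
  (forall s, 0 < s <= 1 -> call s -> desc s) ->
  forall s, ls_result c desc call tau1 tau2 s ->
  [/\ 0 < s <= 1, Num.min 1 (tau1 * b) <= s & desc s].
Proof.
move=> t1 t12 t2 b0 hc hcall hdesc.
have H31 : forall s, ls_step31 c tau1 tau2 s -> 0 < s <= 1 /\ Num.min 1 (tau1 * b) <= s.
  move=> s; elim => [|t t' _ [/andP[tp t1'] tm] nc /andP[l1 l2]].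
    by rewrite ltr01 lexx ge_min lexx.
  have bt : b < t.
    rewrite ltNge; apply/negP => tb; apply: nc; apply: hc; by rewrite tp tb.
  have : tau1 * b < tau1 * t by rewrite ltr_pM2l.
  move=> h; split.
    apply/andP; split; nra.
  rewrite ge_min; apply/orP; right; lra.
have H33 : forall s, ls_step33 c desc call tau1 tau2 s -> 0 < s <= 1 /\ b < s.
  move=> s; elim => [t st ct nd|t t' _ [/andP[tp t1'] bt] /andP[l1 l2] nc].
    have [/andP[tp t1'] _] := H31 _ st.
    split; first by rewrite tp t1'.
    rewrite ltNge; apply/negP => tb; apply: nd; apply: hdesc; first by rewrite tp.
    by apply: hcall; rewrite tp tb.
  have tp' : 0 < t' by nra.
  split; first by apply/andP; split; nra.
  rewrite ltNge; apply/negP => tb; apply: nc; apply: hcall; by rewrite tp' tb.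
move=> s; case => [t st ct dt|t t' st /andP[l1 l2] ct].
  by have [? ?] := H31 _ st; split.
have [/andP[tp t1'] bt] := H33 _ st.
have tp' : 0 < t' by nra.
have st' : 0 < t' <= 1 by apply/andP; split; nra.
split => //; last exact: hdesc.
rewrite ge_min; apply/orP; right; nra.
Qed.
End LS.

Lemma efinE {R : realType} (v : \bar R) : (-oo < v)%E -> (v < +oo)%E -> v = (fine v)%:E.
Proof. by move=> a b; rewrite fineK //; apply/fin_numPlt; rewrite a b. Qed.

Lemma vec_comb {R : realType} {n : nat} (r : R) (p x : 'rV[R]_n) :
  r *: p + (1 - r) *: x = x + r *: (p - x).
Proof. by apply/rowP => i; rewrite !mxE; ring. Qed.

Lemma prox_facts {R : realType} {n m : nat} (gradG : 'I_m -> 'rV[R]_n -> 'rV[R]_n)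
  (H : 'I_m -> 'rV[R]_n -> \bar R) (alpha gamma : R) (x p : 'rV[R]_n) :
  (0 < m)%N -> (forall j, proper_ext (H j) /\ convex_ext (H j)) ->
  domF H x -> is_prox gradG H alpha x p -> 0 < alpha -> 0 < gamma -> gamma < 2 / alpha ->
  domF H p /\ forall j, dotv (gradG j x) (p - x) + fine (H j p) - fine (H j x)
                        + gamma / 2 * sqnorm (p - x) <= 0.
Proof.
move=> m0 hH xd hp a0 g0 g2.
have Hx : forall j, H j x = (fine (H j x))%:E.
  by move=> j; apply: efinE; [exact: (hH j).1.2 | exact: xd].
set d := p - x; set D := sqnorm d.
have psixx : (psi gradG H x x <= 0)%E.
  rewrite /psi; apply: bigmax_le => [|j _]; first exact: leNye.
  by rewrite subrr dotv0r (Hx j) -EFinD add0r subrr.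
have pp : (prox_obj gradG H alpha x p <= 0)%E.
  apply: le_trans (hp x) _.
  by rewrite /prox_obj subrr /sqnorm dotv0r mul0r adde0.
pose term u j := ((dotv (gradG j x) (u - x))%:E + H j u - H j x)%E.
have termle : forall j, (term p j <= psi gradG H x p)%E.
  by move=> j; rewrite /psi; apply: (le_bigmax_cond _ (fun j => term p j)).
have Hp : forall j, H j p = (fine (H j p))%:E.
  move=> j; have := termle j; rewrite /term; have [[_ prop] _] := hH j.
  case E: (H j p) => [r| |] //.
    rewrite (Hx j) /= => h.
    move: pp; rewrite /prox_obj.
    have -> : psi gradG H x p = +oo%E by apply/eqP; rewrite eq_le leey.
    by [].
  by have := prop p; rewrite E.
have domp : domF H p by move=> j; rewrite Hp ltry.
split => //.
pose a j := dotv (gradG j x) d + fine (H j p) - fine (H j x).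
have Ea : forall j, term p j = (a j)%:E.
  by move=> j; rewrite /term (Hp j) (Hx j) -EFinD.
have j0 : 'I_m := Ordinal m0.
case E: (psi gradG H x p) => [A| |].
- have aA : forall j, a j <= A by move=> j; have := termle j; rewrite E Ea lee_fin.
  have ga : gamma * alpha < 2 by rewrite -ltr_pdivlMr.
  set r := gamma * alpha / 2.
  have r0 : 0 < r by rewrite /r; apply: divr_gt0 => //; apply: mulr_gt0.
  have r1 : r < 1 by rewrite /r; lra.
  set u := x + r *: d.
  have ux : u - x = r *: d by rewrite /u addrC addKr.
  have psiu : (psi gradG H x u <= (r * A)%:E)%E.
    rewrite /psi; apply: bigmax_le => [|j _]; first exact: leNye.
    have r01 : 0 <= r <= 1 by rewrite (ltW r0) (ltW r1).
    have cv := (hH j).2 p x r (domp j) (xd j) r01.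
    rewrite vec_comb -/d -/u in cv.
    have Hu : H j u = (fine (H j u))%:E.
      by apply: efinE; [exact: (hH j).1.2 | exact: le_lt_trans cv (ltry _)].
    rewrite Hu lee_fin in cv.
    rewrite Hu (Hx j) -EFinD lee_fin ux dotvZr.
    have := aA j; rewrite /a => h.
    nra.
  have key := hp u; rewrite /prox_obj E in key.
  have key2 := leeD2r ((sqnorm (u - x) / (2 * alpha))%:E) psiu.
  have := le_trans key key2; rewrite -!EFinD lee_fin ux sqnormZ -/d -/D => h1.
  set q := D / (2 * alpha) in h1.
  have q0 : 0 <= q by rewrite /q divr_ge0 // ?sqnorm_ge0 // mulr_ge0 // ltW.
  have Dq : D = 2 * alpha * q by rewrite /q; field; rewrite gt_eqF.
  have h1' : A + q <= r * A + r ^+ 2 * q by move: h1; rewrite mulrA.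
  have hA : A <= - (1 + r) * q by nra.
  move=> j; rewrite Dq.
  have -> : gamma / 2 * (2 * alpha * q) = 2 * r * q by rewrite /r; field.
  have := aA j; rewrite /a => h.
  nra.
- by move: pp; rewrite /prox_obj E.
- by have := termle j0; rewrite E Ea.
Qed.

Lemma call_desc {R : realType} {n m : nat} (G : 'I_m -> 'rV[R]_n -> R)
  (gradG : 'I_m -> 'rV[R]_n -> 'rV[R]_n)
  (H : 'I_m -> 'rV[R]_n -> \bar R) (alpha gamma : R) (x p : 'rV[R]_n) (s : R) :
  (0 < m)%N -> (forall j, proper_ext (H j) /\ convex_ext (H j)) ->
  domF H x -> is_prox gradG H alpha x p -> 0 < alpha -> 0 < gamma -> gamma < 2 / alpha ->
  0 < s <= 1 -> (forall j, armijo G gradG gamma j x (p - x) s) ->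
  F_le G H (x + s *: (p - x)) x.
Proof.
move=> m0 hH xd hp a0 g0 g2 /andP[s0 s1] arm.
have [domp key] := prox_facts gradG H alpha gamma x p m0 hH xd hp a0 g0 g2.
move=> j; rewrite /Fj.
have Hx : H j x = (fine (H j x))%:E.
  by apply: efinE; [exact: (hH j).1.2 | exact: xd].
have s01 : 0 <= s <= 1 by rewrite (ltW s0) s1.
have cv := (hH j).2 p x s (domp j) (xd j) s01.
rewrite vec_comb in cv.
set y := x + s *: (p - x) in cv *.
have Hy : H j y = (fine (H j y))%:E.
  by apply: efinE; [exact: (hH j).1.2 | exact: le_lt_trans cv (ltry _)].
rewrite Hy lee_fin in cv.
rewrite Hy Hx -!EFinD lee_fin.
have := key j; have := arm j; rewrite /armijo -/y => h1 h2.
nra.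
Qed.

Theorem mainTheorem5 (R : realType) (n m : nat)
  (G : 'I_m -> 'rV[R]_n -> R) (gradG : 'I_m -> 'rV[R]_n -> 'rV[R]_n)
  (H : 'I_m -> 'rV[R]_n -> \bar R) (alpha gamma tau1 tau2 : R)
  (L : 'I_m -> R)
  (x p : nat -> 'rV[R]_n) (t : nat -> R) (jstar : nat -> 'I_m) :
  (0 < m)%N ->
  composite_setting G gradG H ->
  (forall j, 0 < L j /\ lipschitz_grad (gradG j) (L j)) ->
  MPG_sequence G gradG H alpha gamma tau1 tau2 x p t jstar ->
  forall k, reached gradG H alpha x p k ->
    theta gradG H alpha (x k) (p k) <> 0%E ->
    Num.min 1 (tau1 * gamma / Lmax L) <= t k.
Proof.
move=> m0 [hG hH' _ _] hL [[x0d a0 /andP[g0 g2] /andP[t1 /andP[t12 t2]]] hk].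
have hH : forall j, proper_ext (H j) /\ convex_ext (H j).
  by move=> j; have [? [? _]] := hH' j.
have j0 : 'I_m := Ordinal m0.
have LleM : forall j, L j <= Lmax L.
  by move=> j; rewrite /Lmax; apply: (le_bigmax_cond _ (fun j => L j)).
have M0 : 0 < Lmax L by apply: lt_le_trans (LleM j0); exact: (hL j0).1.
set b := gamma / Lmax L.
have b0 : 0 < b by rewrite /b divr_gt0.
have armb : forall k j s, 0 < s <= b -> armijo G gradG gamma j (x k) (p k - x k) s.
  move=> k j s /andP[s0 sb].
  have [Lj0 Lj] := hL j.
  apply: (@armijo_of R n m G gradG gamma (L j)) => //; first by have [? _] := hG j.
    exact: ltW.
  have : Lmax L * s <= gamma.
    by rewrite mulrC -ler_pdivlMr.
  have := LleM j; nra.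
have LS : forall k, reached gradG H alpha x p k -> domF H (x k) ->
    theta gradG H alpha (x k) (p k) <> 0%E ->
    [/\ 0 < t k <= 1, Num.min 1 (tau1 * b) <= t k &
        F_le G H (x k + t k *: (p k - x k)) (x k)].
  move=> k rk xd th.
  have [prox step] := hk k rk.
  have [_ ls _] := step th.
  have hc : forall s, 0 < s <= b -> armijo G gradG gamma (jstar k) (x k) (p k - x k) s.
    by move=> s sb; apply: armb.
  have hcall : forall s, 0 < s <= b -> forall j, armijo G gradG gamma j (x k) (p k - x k) s.
    by move=> s sb j; apply: armb.
  have hdesc : forall s, 0 < s <= 1 -> (forall j, armijo G gradG gamma j (x k) (p k - x k) s) ->
      F_le G H (x k + s *: (p k - x k)) (x k).
    by move=> s s01 call; apply: (call_desc G gradG H alpha gamma (x k) (p k) s m0 hH xd prox a0 g0 g2 s01 call).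
  exact: (ls_bound _ _ _ _ _ _ t1 t12 t2 b0 hc hcall hdesc (t k) ls).
have dom : forall k, reached gradG H alpha x p k -> domF H (x k).
  elim => [|k IH] rk1 //.
  have rk : reached gradG H alpha x p k.
    by move=> i ik; apply: rk1; apply: ltn_trans ik _.
  have th : theta gradG H alpha (x k) (p k) <> 0%E by apply: rk1.
  have xd := IH rk.
  have [_ _ desc] := LS k rk xd th.
  have [_ step] := hk k rk.
  have [_ _ ->] := step th.
  move=> j; have := desc j; rewrite /Fj.
  have Hx : H j (x k) = (fine (H j (x k)))%:E.
    by apply: efinE; [exact: (hH j).1.2 | exact: xd].
  rewrite Hx.
  case: (H j _) => [r| |] //.
  by move=> _; exact: ltry.
move=> k rk th.
have [_ h _] := LS k rk (dom k rk) th.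
by rewrite -mulrA.
Qed.
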